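(* Let $n \ge 2$ and let $n_1, m_1 \in \mathbb{Z}$ be such that $\mathcal{P}_n(n_1;m_1)$ is a regular presentation of $Q_{4n}$. Then $\mathcal{P}_n(m_1;n_1)$ is a regular presentation of $Q_{4n}$ and $\mathcal{P}_n(n_1;m_1) \simeq_{Q^*} \mathcal{P}_n(m_1;n_1)$. Furthermore, $\mathcal{E}_{n,r} \simeq_{Q^*} \mathcal{E}_{n,1-r}$ for all $r \in \mathbb{Z}$, where $\mathcal{E}_{n,r} := \mathcal{P}_n(2;1-r)$.
   Context: $Q_{4n}$ is identified with $\langle x, y \mid x^n y^{-2}, xyxy^{-1} \rangle$; $\mathcal{P}_n(n_1;m_1) = \langle x, y \mid x^n y^{-2},\ x^{n_1} y x^{m_1} y^{-1} x^{1-n_1} y x^{1-m_1} y^{-1} \rangle$, regular if $x\mapsto x$, $y\mapsto y$ induces an isomorphism of the presented group onto $Q_{4n}$. Two finite presentations on the same generators are $Q^*$-equivalent ($\simeq_{Q^*}$) if related by a finite sequence of the moves: replace a relator $r_i$ by $r_ir_j$ ($j\neq i$); replace $r_i$ by $r_i^{-1}$; replace $r_i$ by $wr_iw^{-1}$ for $w$ in the free group on the generators; replace every relator $r_i$ by $\phi(r_i)$ for an automorphism $\phi$ of the free group on the generators. *)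

(* Defs.v *)
From mathcomp Require Import all_boot all_order all_algebra.
From Stdlib Require Import Relations.
Set Implicit Arguments. Unset Strict Implicit. Unset Printing Implicit Defensive.
Import GRing.Theory Num.Theory.

(* A letter is (generator, inverted?) with generator false = x, true = y. *)
Definition letter := (bool * bool)%type.
Definition word := seq letter.
Definition linv (l : letter) : letter := (l.1, ~~ l.2).

Definition cons_red (l : letter) (w : word) : word :=
  match w with
  | l' :: w' => if l' == linv l then w' else l :: w
  | [::] => [:: l]
  end.

Definition reduce (w : word) : word := foldr cons_red [::] w.
Definition reduced (w : word) : bool := reduce w == w.

Lemma size_cons_red l w : (size (cons_red l w) <= (size w).+1)%N.
Proof. case: w => [|l' w] //=; case: ifP => _ //=; exact: leqW. Qed.

Lemma size_reduce w : (size (reduce w) <= size w)%N.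
Proof.
elim: w => [|l w IH] //=; apply: leq_trans (size_cons_red _ _) _; by [].
Qed.

Lemma reduce_cons_red l w : reduce w = w -> reduce (cons_red l w) = cons_red l w.
Proof.
case: w => [|l' w] //= Hw.
case: ifP => Hl.
- move: Hw; case E: (reduce w) => [|l'' u] /=.
    by move=> [] <-.
  case: ifP => _ Hu.
  + have := size_reduce w; rewrite E Hu /= ltnNge; by rewrite leqnSn.
  + by case: Hu.
- by rewrite /= Hw /= Hl.
Qed.

Lemma reduce_reduced w : reduced (reduce w).
Proof.
apply/eqP; elim: w => [|l w IH] //=; exact: reduce_cons_red.
Qed.

Definition F2 := {w : word | reduced w}.
Definition mkF (w : word) : F2 := exist _ (reduce w) (reduce_reduced w).
Definition fgone : F2 := mkF [::].
Definition fgmul (a b : F2) : F2 := mkF (proj1_sig a ++ proj1_sig b).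
Definition fginv (a : F2) : F2 := mkF (rev (map linv (proj1_sig a))).
Definition gx : F2 := mkF [:: (false, false)].
Definition gy : F2 := mkF [:: (true, false)].

Definition fgpow (g : F2) (k : int) : F2 :=
  match k with
  | Posz m => iter m (fgmul g) fgone
  | Negz m => iter m.+1 (fgmul (fginv g)) fgone
  end.

Definition fgprod (s : seq F2) : F2 := foldr fgmul fgone s.

Definition presentation := seq F2.

Definition Qpres (n : nat) : presentation :=
  [:: fgprod [:: fgpow gx n; fgpow gy (-2)];
      fgprod [:: gx; gy; gx; fginv gy]].

Definition Ppres (n : nat) (n1 m1 : int) : presentation :=
  [:: fgprod [:: fgpow gx n; fgpow gy (-2)];
      fgprod [:: fgpow gx n1; gy; fgpow gx m1; fginv gy;
                fgpow gx (1 - n1)%R; gy; fgpow gx (1 - m1)%R; fginv gy]].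

Definition Epres (n : nat) (r : int) : presentation := Ppres n 2 (1 - r)%R.

Inductive nclosure (rs : presentation) : F2 -> Prop :=
  | nc_one : nclosure rs fgone
  | nc_rel r : r \in rs -> nclosure rs r
  | nc_mul a b : nclosure rs a -> nclosure rs b -> nclosure rs (fgmul a b)
  | nc_inv a : nclosure rs a -> nclosure rs (fginv a)
  | nc_conj w a : nclosure rs a -> nclosure rs (fgmul w (fgmul a (fginv w))).

Definition pres_eq (rs : presentation) (u v : F2) : Prop :=
  nclosure rs (fgmul u (fginv v)).

(* The map x |-> x, y |-> y (i.e. [w]_rs |-> [w]_Q) is a well-defined,
   injective and surjective map from <x,y | rs> to Q_{4n}.
   (It is then automatically a homomorphism.) *)
Definition regular (n : nat) (rs : presentation) : Prop :=
  [/\ (forall u v, pres_eq rs u v -> pres_eq (Qpres n) u v),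
      (forall u v, pres_eq (Qpres n) u v -> pres_eq rs u v)
    & (forall v, exists u, pres_eq (Qpres n) u v)].

Definition is_aut (phi : F2 -> F2) : Prop :=
  (forall a b, phi (fgmul a b) = fgmul (phi a) (phi b)) /\ bijective phi.

Inductive qmove : presentation -> presentation -> Prop :=
  | qm_mul (rs : presentation) (i j : nat) :
      (i < size rs)%N -> (j < size rs)%N -> i <> j ->
      qmove rs (set_nth fgone rs i (fgmul (nth fgone rs i) (nth fgone rs j)))
  | qm_inv (rs : presentation) (i : nat) :
      (i < size rs)%N ->
      qmove rs (set_nth fgone rs i (fginv (nth fgone rs i)))
  | qm_conj (rs : presentation) (i : nat) (w : F2) :
      (i < size rs)%N ->
      qmove rs (set_nth fgone rs i (fgmul w (fgmul (nth fgone rs i) (fginv w))))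
  | qm_aut (rs : presentation) (phi : F2 -> F2) :
      is_aut phi -> qmove rs (map phi rs).

Definition Qstar_equiv : presentation -> presentation -> Prop :=
  clos_refl_trans presentation qmove.

(* Main.v *)
Require Import Defs.
From mathcomp Require Import all_boot all_order all_algebra.
From mathcomp Require Import zify.
From Stdlib Require Import Relations.
Set Implicit Arguments. Unset Strict Implicit. Unset Printing Implicit Defensive.

Definition act (u w : word) : word := foldr cons_red w u.

Lemma linvK l : linv (linv l) = l.
Proof. by case: l => a b; rewrite /linv /= negbK. Qed.

Lemma reduced_cons l t : reduced (l :: t) -> reduced t /\ ohead t != Some (linv l).
Proof.
move/eqP=> /= H.
have Ht : reduce t = t.
  move: H; case E: (reduce t) => [|l' u] /=.
    by case=> <-.
  case: ifP => _ Hu.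
  - have := size_reduce t; rewrite E Hu /= ltnNge; by rewrite leqnSn.
  - by case: Hu => Hu; rewrite -Hu.
split; first by apply/eqP.
move: H; rewrite Ht; case: t Ht => [|l' t'] //= Ht.
case: ifP => Hl Hu.
- by have := congr1 size Hu => /= E; lia.
- by apply/negP => /eqP [] E; rewrite E eqxx in Hl.
Qed.

Lemma reducedP w : reduce w = w <-> reduced w.
Proof. by rewrite /reduced; split => [->|/eqP]. Qed.

Lemma cons_red_reduced l t : reduced t -> reduced (cons_red l t).
Proof. by move/reducedP=> H; apply/reducedP; apply: reduce_cons_red. Qed.

Lemma cons_redK l t : reduced t -> cons_red l (cons_red (linv l) t) = t.
Proof.
case: t => [|l' t] /=; first by rewrite eqxx.
move=> Hr.
case: ifP => Hl.
- move/eqP: Hl; rewrite linvK => E; subst l'.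
  case: t Hr => [|l'' t] //= Hr.
  have [_ /=] := reduced_cons Hr.
  move=> H; case: ifP => // /eqP E; by rewrite E eqxx in H.
- by rewrite /= eqxx.
Qed.

Lemma act_reduced u t : reduced t -> reduced (act u t).
Proof. elim: u => [|l u IH] //= Ht; apply: cons_red_reduced; exact: IH. Qed.

Lemma act_cons_red l s w : reduced s -> reduced w ->
  act (cons_red l s) w = cons_red l (act s w).
Proof.
case: s => [|l' s] //= Hs Hw.
case: ifP => // /eqP E.
have [Hs' _] := reduced_cons Hs.
by rewrite E cons_redK //; apply: act_reduced.
Qed.

Lemma act_reduce u w : reduced w -> act (reduce u) w = act u w.
Proof.
move=> Hw; elim: u => [|l u IH] //=.
by rewrite act_cons_red ?IH //; apply: reduce_reduced.
Qed.

Lemma reduce_cat u v : reduce (u ++ v) = act u (reduce v).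
Proof. by rewrite /reduce foldr_cat. Qed.

Lemma F2_eq (a b : F2) : proj1_sig a = proj1_sig b -> a = b.
Proof.
case: a b => [a Ha] [b Hb] /= E; subst b; congr exist; exact: bool_irrelevance.
Qed.

Lemma mkF_val a : mkF (proj1_sig a) = a.
Proof. apply: F2_eq => /=; apply/reducedP; exact: (proj2_sig a). Qed.

Lemma reduceK w : reduce (reduce w) = reduce w.
Proof. apply/reducedP; exact: reduce_reduced. Qed.

Lemma fgmul_mkF u v : fgmul (mkF u) (mkF v) = mkF (u ++ v).
Proof.
apply: F2_eq => /=.
by rewrite !reduce_cat reduceK act_reduce //; apply: reduce_reduced.
Qed.

Lemma fgmulA a b c : fgmul a (fgmul b c) = fgmul (fgmul a b) c.
Proof.
rewrite -(mkF_val a) -(mkF_val b) -(mkF_val c) !fgmul_mkF; by rewrite catA.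
Qed.

Lemma fg1mul a : fgmul fgone a = a.
Proof. by rewrite /fgone -(mkF_val a) fgmul_mkF. Qed.

Lemma fgmul1 a : fgmul a fgone = a.
Proof. by rewrite /fgone -(mkF_val a) fgmul_mkF cats0. Qed.

Definition winv (u : word) := rev (map linv u).

Lemma act_inv u t : reduced t -> act u (act (winv u) t) = t.
Proof.
elim: u t => [|l u IH] t Ht //=.
rewrite /winv map_cons rev_cons -cats1 /act foldr_cat /=.
rewrite -/(act _ _) -/(winv u) IH ?cons_redK //.
exact: cons_red_reduced.
Qed.

Lemma winvK u : winv (winv u) = u.
Proof. by rewrite /winv map_rev revK -map_comp (eq_map linvK) map_id. Qed.

Lemma fgmulV a : fgmul a (fginv a) = fgone.
Proof.
rewrite -{1}(mkF_val a) /fginv fgmul_mkF; apply: F2_eq => /=.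
by rewrite reduce_cat act_inv.
Qed.

Lemma fgVmul a : fgmul (fginv a) a = fgone.
Proof.
rewrite -{2}(mkF_val a) /fginv fgmul_mkF; apply: F2_eq => /=.
rewrite reduce_cat -{2}(winvK (proj1_sig a)) act_inv //.
Qed.

Lemma mulKg a b : fgmul (fginv a) (fgmul a b) = b.
Proof. by rewrite fgmulA fgVmul fg1mul. Qed.
Lemma mulVKg a b : fgmul a (fgmul (fginv a) b) = b.
Proof. by rewrite fgmulA fgmulV fg1mul. Qed.

Lemma inv_uniq a b : fgmul a b = fgone -> b = fginv a.
Proof. by move=> H; rewrite -(mulKg a b) H fgmul1. Qed.

Lemma fginvK a : fginv (fginv a) = a.
Proof. by symmetry; apply: inv_uniq; rewrite fgVmul. Qed.

Lemma fginv_mul a b : fginv (fgmul a b) = fgmul (fginv b) (fginv a).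
Proof.
symmetry; apply: inv_uniq.
by rewrite -fgmulA mulVKg fgmulV.
Qed.

Lemma fginv1 : fginv fgone = fgone.
Proof. by symmetry; apply: inv_uniq; rewrite fgmul1. Qed.

Definition fcomm a b := fgmul a b = fgmul b a.

Lemma fcommV a b : fcomm a b -> fcomm (fginv a) b.
Proof.
rewrite /fcomm => H.
have E : fgmul (fginv a) (fgmul (fgmul a b) (fginv a)) = fgmul b (fginv a).
  by rewrite -fgmulA mulKg.
by rewrite H -fgmulA fgmulV fgmul1 in E.
Qed.

Lemma fcomm_sym a b : fcomm a b -> fcomm b a.
Proof. by []. Qed.

Lemma fcomm_iter a b m : fcomm a b -> fcomm (iter m (fgmul a) fgone) b.
Proof.
rewrite /fcomm => H; elim: m => [|m IH] /=; first by rewrite fgmul1 fg1mul.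
by rewrite -fgmulA IH !fgmulA H.
Qed.

Lemma fcomm_refl a : fcomm a a. Proof. by []. Qed.

Lemma fcomm_pow g k : fcomm g (fgpow g k).
Proof.
case: k => m /=.
- exact: (fcomm_sym (fcomm_iter m (fcomm_refl g))).
- exact: (fcomm_sym (fcomm_iter m.+1 (fcommV (fcomm_refl g)))).
Qed.

Lemma fcomm_pow2 g (m : nat) k : fcomm (fgpow g m) (fgpow g k).
Proof. apply: fcomm_iter; exact: fcomm_pow. Qed.

Lemma conjV_comm c d : fcomm c d -> fgmul (fginv c) (fgmul (fginv d) c) = fginv d.
Proof.
move=> H; have H' := fcommV (fcomm_sym H).
by rewrite /fcomm in H'; rewrite H' mulKg.
Qed.

Lemma iter_inv g m : fginv (iter m (fgmul g) fgone) = iter m (fgmul (fginv g)) fgone.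
Proof.
elim: m => [|m IH] /=; first exact: fginv1.
have := fcomm_iter m (fcomm_refl g); rewrite /fcomm => <-.
by rewrite fginv_mul IH.
Qed.

Lemma pow_inv g k : fgpow (fginv g) k = fginv (fgpow g k).
Proof.
case: k => m; rewrite /fgpow; first by rewrite iter_inv.
by rewrite iter_inv fginvK.
Qed.

Definition fhom (h : F2 -> F2) := forall a b, h (fgmul a b) = fgmul (h a) (h b).

Section Hom.
Variable h : F2 -> F2.
Hypothesis Hh : fhom h.

Lemma hom1 : h fgone = fgone.
Proof.
have E := Hh fgone fgone; rewrite fgmul1 in E.
by rewrite -(mulKg (h fgone) (h fgone)) -E fgVmul.
Qed.

Lemma homV a : h (fginv a) = fginv (h a).
Proof. apply: inv_uniq; by rewrite -Hh fgmulV hom1. Qed.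

Lemma hom_iter g m : h (iter m (fgmul g) fgone) = iter m (fgmul (h g)) fgone.
Proof. elim: m => [|m IH] /=; [exact: hom1| by rewrite Hh IH]. Qed.

Lemma hom_pow g k : h (fgpow g k) = fgpow (h g) k.
Proof. case: k => m; rewrite /fgpow; by rewrite hom_iter ?homV. Qed.

Lemma nc_hom (rs rs' : presentation) :
  (forall r, r \in rs -> nclosure rs' (h r)) ->
  forall a, nclosure rs a -> nclosure rs' (h a).
Proof.
move=> Hr a; elim => {a} [|r Hin|a b _ IHa _ IHb|a _ IH|w a _ IH].
- rewrite hom1; exact: nc_one.
- exact: Hr.
- rewrite Hh; exact: nc_mul.
- rewrite homV; exact: nc_inv.
- rewrite !Hh homV; exact: nc_conj.
Qed.
End Hom.

Definition ext (f : letter -> F2) (a : F2) : F2 := fgprod (map f (proj1_sig a)).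

Lemma fgprod_cat s t : fgprod (s ++ t) = fgmul (fgprod s) (fgprod t).
Proof. elim: s => [|x s IH] /=; by rewrite ?fg1mul // IH fgmulA. Qed.

Section Ext.
Variable f : letter -> F2.
Hypothesis Hf : forall l, f (linv l) = fginv (f l).

Lemma prod_cons_red l s :
  fgprod (map f (cons_red l s)) = fgmul (f l) (fgprod (map f s)).
Proof.
case: s => [|l' s] //=; case: ifP => //= /eqP ->.
by rewrite Hf mulVKg.
Qed.

Lemma ext_mkF w : ext f (mkF w) = fgprod (map f w).
Proof.
rewrite /ext /=; elim: w => [|l w IH] //=.
by rewrite prod_cons_red IH.
Qed.

Lemma ext_hom : fhom (ext f).
Proof.
move=> a b; rewrite /fgmul ext_mkF map_cat fgprod_cat; by [].
Qed.
End Ext.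

Definition lone (l : letter) : F2 := mkF [:: l].

Lemma prod_lone w : fgprod (map lone w) = mkF w.
Proof.
elim: w => [|l w IH] //=; rewrite IH /lone fgmul_mkF; by [].
Qed.

Definition lf (base : bool -> F2) (l : letter) : F2 :=
  if l.2 then fginv (base l.1) else base l.1.

Lemma lfV base l : lf base (linv l) = fginv (lf base l).
Proof. by case: l => g [] /=; rewrite /lf /= ?fginvK. Qed.

Lemma ext_prod (h : F2 -> F2) s : fhom h -> h (fgprod s) = fgprod (map h s).
Proof.
move=> Hh; elim: s => [|x s IH] /=; first exact: hom1.
by rewrite Hh IH.
Qed.

Lemma ext_invol base :
  ext (lf base) (base false) = gx -> ext (lf base) (base true) = gy ->
  forall a, ext (lf base) (ext (lf base) a) = a.
Proof.
move=> Hx Hy a.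
have Hh := ext_hom (lfV base).
rewrite {2}/ext ext_prod // -map_comp.
rewrite -[RHS]mkF_val -prod_lone; congr fgprod; apply: eq_map => -[g b] /=.
rewrite /lf /=; case: b; rewrite ?homV //; case: g; rewrite ?Hx ?Hy //.
Qed.

Lemma ext_aut base :
  ext (lf base) (base false) = gx -> ext (lf base) (base true) = gy ->
  is_aut (ext (lf base)).
Proof.
move=> Hx Hy; split; first exact: ext_hom (lfV base).
by exists (ext (lf base)); move=> a; apply: ext_invol.
Qed.

Lemma ext_gx base : ext (lf base) gx = base false.
Proof. by rewrite /gx (ext_mkF (lfV base)) /= fgmul1. Qed.
Lemma ext_gy base : ext (lf base) gy = base true.
Proof. by rewrite /gy (ext_mkF (lfV base)) /= fgmul1. Qed.

Import GRing.Theory.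
Arguments fgmul : simpl never.
Arguments fginv : simpl never.
Arguments fgpow : simpl never.
Arguments ext : simpl never.
Arguments mkF : simpl never.
Opaque fgmul fginv fgpow.
Lemma fgprod_cons x s : fgprod (x :: s) = fgmul x (fgprod s). Proof. by []. Qed.
Lemma fgprod_nil : fgprod [::] = fgone. Proof. by []. Qed.

Definition R1 (n : nat) : F2 := fgprod [:: fgpow gx n; fgpow gy (-2)].
Definition Rr (a b : int) : F2 :=
  fgprod [:: fgpow gx a; gy; fgpow gx b; fginv gy;
             fgpow gx (1 - a)%R; gy; fgpow gx (1 - b)%R; fginv gy].
Lemma PpresE n a b : Ppres n a b = [:: R1 n; Rr a b].
Proof. by []. Qed.

Lemma pow_m2 g : fgpow g (-2) = fgmul (fginv g) (fgmul (fginv g) fgone).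
Proof. by []. Qed.

Definition conj w a := fgmul w (fgmul a (fginv w)).

Ltac norm := rewrite /conj /R1 /Rr ?fgprod_cons ?fgprod_nil ?pow_m2 ?fginv_mul ?fginvK ?fgmul1 ?fg1mul -?fgmulA
  ?(mulKg, mulVKg, fgmulV, fgVmul, fgmul1, fg1mul).

Lemma conj_inv_solve w p r : conj w (fginv p) = r -> p = fginv (conj (fginv w) r).
Proof. move=> <-; norm; by []. Qed.

Lemma comm_cancel c d r : fcomm c d -> fgmul (fginv c) (fgmul d (fgmul c r)) = fgmul d r.
Proof. by move=> H; rewrite (fgmulA d c r) -H -fgmulA mulKg. Qed.

Lemma qm_inv0 r1 r2 : qmove [:: r1; r2] [:: fginv r1; r2].
Proof. exact: (@qm_inv [:: r1; r2] 0 erefl). Qed.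
Lemma qm_inv1 r1 r2 : qmove [:: r1; r2] [:: r1; fginv r2].
Proof. exact: (@qm_inv [:: r1; r2] 1 erefl). Qed.
Lemma qm_conj0 w r1 r2 : qmove [:: r1; r2] [:: conj w r1; r2].
Proof. exact: (@qm_conj [:: r1; r2] 0 w erefl). Qed.
Lemma qm_conj1 w r1 r2 : qmove [:: r1; r2] [:: r1; conj w r2].
Proof. exact: (@qm_conj [:: r1; r2] 1 w erefl). Qed.


Definition phib (g : bool) : F2 := if g then fginv gy else fginv gx.
Definition phi := ext (lf phib).

Lemma phi_hom : fhom phi. Proof. exact: ext_hom (lfV _). Qed.
Lemma phi_x : phi gx = fginv gx. Proof. exact: ext_gx. Qed.
Lemma phi_y : phi gy = fginv gy. Proof. exact: ext_gy. Qed.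
Lemma phi_aut : is_aut phi.
Proof.
apply: ext_aut => /=; by rewrite (homV (ext_hom (lfV _))) ?ext_gx ?ext_gy /= fginvK.
Qed.

Lemma phi_pow k : phi (fgpow gx k) = fginv (fgpow gx k).
Proof. by rewrite (hom_pow phi_hom) phi_x pow_inv. Qed.

Ltac phisimp := rewrite /R1 /Rr ?fgprod_cons ?fgprod_nil ?phi_hom ?(homV phi_hom) ?phi_pow
   ?(hom_pow phi_hom) ?phi_x ?phi_y ?(hom1 phi_hom) ?pow_m2.

Lemma phi_R a b :
  conj (fgmul (fgpow gx b) (fgmul gy (fgpow gx a))) (fginv (phi (Rr a b))) = Rr b a.
Proof.
rewrite /conj; phisimp.
move: (fgpow gx a) (fgpow gx b) (fgpow gx (1 - a)) (fgpow gx (1 - b)) gy => A B C D Y.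
by norm.
Qed.

Lemma phi_R1 (n : nat) : conj (fgpow gx n) (fginv (phi (R1 n))) = R1 n.
Proof.
rewrite /conj; phisimp.
move: (fgpow gx n) gy => N Y.
by norm.
Qed.

Definition Q2 := fgprod [:: gx; gy; gx; fginv gy].
Lemma QpresE n : Qpres n = [:: R1 n; Q2].
Proof. by []. Qed.

Lemma phi_Q2 : phi Q2 = fginv (conj (fginv gy) Q2).
Proof.
rewrite /Q2; phisimp.
move: gx gy => X Y.
by norm.
Qed.

Lemma phi_phi u : phi (phi u) = u.
Proof.
apply: ext_invol => /=; by rewrite (homV (ext_hom (lfV _))) ?ext_gx ?ext_gy /= fginvK.
Qed.

Lemma phi_chain n a b : Qstar_equiv (Ppres n a b) (Ppres n b a).
Proof.
rewrite /Qstar_equiv !PpresE.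
eapply rt_trans; first (apply: rt_step; exact: (qm_aut _ phi_aut)).
rewrite [map _ _]/=.
eapply rt_trans; first (apply: rt_step; exact: (qm_inv0 _ _)).
eapply rt_trans; first (apply: rt_step; exact: (qm_conj0 (fgpow gx n) _ _)).
eapply rt_trans; first (apply: rt_step; exact: (qm_inv1 _ _)).
apply: rt_step; have := qm_conj1 (fgmul (fgpow gx b) (fgmul gy (fgpow gx a))) (conj (fgpow gx n) (fginv (phi (R1 n)))) (fginv (phi (Rr a b))).
by rewrite phi_R phi_R1.
Qed.

Lemma nc_phiP n a b u : nclosure (Ppres n b a) u -> nclosure (Ppres n a b) (phi u).
Proof.
apply: nc_hom; first exact: phi_hom.
rewrite PpresE => r; rewrite !inE => /orP [/eqP ->|/eqP ->].
- rewrite (conj_inv_solve (phi_R1 n)).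
  apply: nc_inv; apply: nc_conj; apply: nc_rel; exact: mem_head.
- rewrite (conj_inv_solve (phi_R b a)).
  apply: nc_inv; apply: nc_conj; apply: nc_rel; by rewrite ?PpresE !inE eqxx orbT.
Qed.

Lemma nc_phiQ n u : nclosure (Qpres n) u -> nclosure (Qpres n) (phi u).
Proof.
apply: nc_hom; first exact: phi_hom.
rewrite QpresE => r; rewrite !inE => /orP [/eqP ->|/eqP ->].
- rewrite (conj_inv_solve (phi_R1 n)).
  apply: nc_inv; apply: nc_conj; apply: nc_rel; exact: mem_head.
- rewrite phi_Q2.
  apply: nc_inv; apply: nc_conj; apply: nc_rel; by rewrite ?QpresE !inE eqxx orbT.
Qed.

Lemma pres_eq1 rs u : pres_eq rs u fgone <-> nclosure rs u.
Proof. by rewrite /pres_eq fginv1 fgmul1. Qed.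

Lemma regular_swap n a b : regular n (Ppres n a b) -> regular n (Ppres n b a).
Proof.
case=> H1 H2 H3; split.
- move=> u v; rewrite /pres_eq => /nc_phiP /pres_eq1 /H1 /pres_eq1 /nc_phiQ.
  by rewrite phi_phi.
- move=> u v; rewrite /pres_eq => /nc_phiQ /pres_eq1 /H2 /pres_eq1 /nc_phiP.
  by rewrite phi_phi.
- exact: H3.
Qed.

Definition psib (n : nat) (g : bool) : F2 :=
  if g then fgmul gy (fginv (fgpow gx n)) else fginv gx.
Definition psi n := ext (lf (psib n)).

Lemma psi_hom n : fhom (psi n). Proof. exact: ext_hom (lfV _). Qed.
Lemma psi_x n : psi n gx = fginv gx. Proof. exact: ext_gx. Qed.
Lemma psi_y n : psi n gy = fgmul gy (fginv (fgpow gx n)). Proof. exact: ext_gy. Qed.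
Lemma psi_pow n k : psi n (fgpow gx k) = fginv (fgpow gx k).
Proof. by rewrite (hom_pow (psi_hom n)) psi_x pow_inv. Qed.

Lemma psi_aut n : is_aut (psi n).
Proof.
apply: ext_aut => /=.
  by rewrite -/(psi n) (homV (psi_hom n)) psi_x fginvK.
rewrite -/(psi n) (psi_hom n) (homV (psi_hom n)) psi_y psi_pow fginvK.
by rewrite -fgmulA fgVmul fgmul1.
Qed.

Ltac psisimp n := rewrite /R1 /Rr ?fgprod_cons ?fgprod_nil ?(psi_hom n) ?(homV (psi_hom n)) ?psi_pow
   ?(hom_pow (psi_hom n)) ?psi_x ?psi_y ?(hom1 (psi_hom n)) ?pow_m2.

Lemma psi_R n a b : conj (fgpow gx a) (fginv (psi n (Rr a b))) = Rr a (1 - b).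
Proof.
rewrite /conj; psisimp n; rewrite subKr.
have HB := fcomm_pow2 gx n b.
have HD := fcomm_pow2 gx n (1 - b).
move: (fgpow gx n) (fgpow gx a) (fgpow gx b) (fgpow gx (1 - a)) (fgpow gx (1 - b)) gy HB HD
  => N A B C D Y HB HD.
norm.
rewrite ?(comm_cancel _ HB) ?(comm_cancel _ HD).
by norm.
Qed.

Lemma psi_R1 n : conj gy (psi n (R1 n)) = R1 n.
Proof.
rewrite /conj; psisimp n.
move: (fgpow gx n) gy => N Y.
by norm.
Qed.

Lemma psi_chain n a b : Qstar_equiv (Ppres n a b) (Ppres n a (1 - b)).
Proof.
rewrite /Qstar_equiv !PpresE.
eapply rt_trans; first (apply: rt_step; exact: (qm_aut _ (psi_aut n))).
rewrite [map _ _]/=.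
eapply rt_trans; first (apply: rt_step; exact: (qm_conj0 gy _ _)).
eapply rt_trans; first (apply: rt_step; exact: (qm_inv1 _ _)).
apply: rt_step; have := qm_conj1 (fgpow gx a) (conj gy (psi n (R1 n))) (fginv (psi n (Rr a b))).
by rewrite psi_R psi_R1.
Qed.

Theorem proposition3p22 (n : nat) : (2 <= n)%N ->
  (forall n1 m1 : int, regular n (Ppres n n1 m1) ->
     regular n (Ppres n m1 n1) /\ Qstar_equiv (Ppres n n1 m1) (Ppres n m1 n1))
  /\ (forall r : int, Qstar_equiv (Epres n r) (Epres n (1 - r)%R)).
Proof.
move=> _; split.
- move=> n1 m1 H; split; [exact: regular_swap | exact: phi_chain].
- move=> r; exact: psi_chain.
Qed.
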